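(* Consider a run of \texttt{SequOOL} with budget $n$ on $f$ with deterministic feedback, and let $h_{\max}=\lfloor n/\bar\log n\rfloor$. Let $x^\star$ be a global optimum of $f$ with associated $(\nu,\rho)$, let $C>1$, and write $d=d(\nu,C,\rho)$. For any depth $h\in[h_{\max}]$, if \[ \frac{h_{\max}}{h}\ \ge\ C\rho^{-d h}, \] then $\bot_h=h$, with the convention $\bot_0=0$.
   Context: Let $\mathcal X$ be a set and $f:\mathcal X\to\mathbb R$ a function attaining its supremum; a point $x^\star$ with $f(x^\star)=\sup_{x\in\mathcal X}f(x)$ is a global optimum. Hierarchical partitioning $\mathcal P=\{\mathcal P_{h,i}\}$: - for every depth $h\ge 0$, the cells $\{\mathcal P_{h,i}\}_{1\le i\le I_h}$ form a partition of $\mathcal X$, and $\mathcal P_{0,1}=\mathcal X$; - each cell $\mathcal P_{h,i}$ is partitioned into finitely many children cells of depth $h+1$; - each cell has a fixed representative point $x_{h,i}\in\mathcal P_{h,i}$, and we write $f_{h,i}=f(x_{h,i})$; - for a global optimum $x^\star$, $i^\star_h$ is the index of the unique depth-$h$ cell containing $x^\star$. Local smoothness: a global optimum $x^\star$ has associated $(\nu,\rho)$, with $\nu>0$ and $\rho\in(0,1)$, if for all $h\in\mathbb N$ and all $x\in\mathcal P_{h,i^\star_h}$ we have $f(x)\ge f(x^\star)-\nu\rho^h$. Near-optimality dimension: for $\nu>0$, $C>1$, $\rho\in(0,1)$, let $\mathcal N_h(\epsilon)$ be the number of depth-$h$ cells $\mathcal P_{h,i}$ with $\sup_{x\in\mathcal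 P_{h,i}}f(x)\ge f(x^\star)-\epsilon$. Define \[ d(\nu,C,\rho)=\inf\{d'\ge 0:\ \forall h\ge 0,\ \mathcal N_h(3\nu\rho^h)\le C\rho^{-d'h}\}, \] which is assumed finite. Notation: $\bar\log n=\sum_{t=1}^n 1/t$ (the $n$-th harmonic number), and $[a]=\{1,\dots,a\}$. Deterministic feedback: evaluating a cell $\mathcal P_{h,i}$ returns $f_{h,i}$ exactly. Opening a cell means evaluating each of its children cells once. \texttt{SequOOL} with budget $n$: set $h_{\max}=\lfloor n/\bar\log n\rfloor$ and open $\mathcal P_{0,1}$. Then, for $h=1,2,\dots,h_{\max}$ in increasing order, open the $\lfloor h_{\max}/h\rfloor$ depth-$h$ cells having the largest values $f_{h,j}$ among the evaluated depth-$h$ cells (or all of them if there are fewer). Finally, output $x(n)$, a representative point $x_{h,i}$ of an evaluated cell maximizing $f_{h,i}$. $\bot_h$ is the depth of the deepest opened cell containing $x^\star$ at the end of iteration $h$ of the loop. *)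

(* Defs.v *)
From Stdlib Require Import Reals Lra Lia List Arith ZArith ClassicalEpsilon.
Import ListNotations.
Open Scope R_scope.

(* Depth-h cells are indexed by i in [1, I h]; cell P_{h,i} = {x | idx h x = i}.
   par h j = index (at depth h) of the parent of the depth-(h+1) cell j.
   rep h i = representative point x_{h,i} of cell P_{h,i}. *)
Record HPart (X : Type) := {
  I : nat -> nat;
  idx : nat -> X -> nat;
  par : nat -> nat -> nat;
  rep : nat -> nat -> X;
  I_root : I 0%nat = 1%nat;
  idx_range : forall h x, (1 <= idx h x <= I h)%nat;
  par_ok : forall h x, par h (idx (S h) x) = idx h x;
  rep_in : forall h i, (1 <= i <= I h)%nat -> idx h (rep h i) = i
}.
Arguments I {X}. Arguments idx {X}. Arguments par {X}. Arguments rep {X}.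

Definition in_cell {X} (P : HPart X) (h i : nat) (x : X) : Prop := idx P h x = i.

Definition fval {X} (P : HPart X) (f : X -> R) (h i : nat) : R := f (rep P h i).

(* n-th harmonic number  \bar log n = sum_{t=1}^n 1/t *)
Fixpoint harm (n : nat) : R :=
  match n with O => 0 | S m => harm m + / INR (S m) end.

Definition nfloor (r : R) : nat := Z.to_nat (Int_part r).

Definition hmax (n : nat) : nat := nfloor (INR n / harm n).

Definition global_opt {X} (f : X -> R) (xs : X) : Prop := forall x, f x <= f xs.

Definition local_smooth {X} (P : HPart X) (f : X -> R) (xs : X) (nu rho : R) : Prop :=
  forall (h : nat) (x : X), in_cell P h (idx P h xs) x -> f x >= f xs - nu * rho ^ h.

(* sup_{x in P_{h,i}} f x >= c : every upper bound of f on the cell is >= c *)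
Definition sup_cell_ge {X} (P : HPart X) (f : X -> R) (h i : nat) (c : R) : Prop :=
  forall u, (forall x, in_cell P h i x -> f x <= u) -> c <= u.

Definition pb (Q : Prop) : bool :=
  if excluded_middle_informative Q then true else false.

Definition Ncells {X} (P : HPart X) (f : X -> R) (xs : X) (h : nat) (eps : R) : nat :=
  length (filter (fun i => pb (sup_cell_ge P f h i (f xs - eps))) (seq 1 (I P h))).

Definition nod_set {X} (P : HPart X) (f : X -> R) (xs : X) (nu C rho : R) (d' : R) : Prop :=
  0 <= d' /\
  forall h : nat, INR (Ncells P f xs h (3 * nu * rho ^ h)) <= C * Rpower rho (- (d' * INR h)).

Definition is_inf (A : R -> Prop) (m : R) : Prop :=
  (forall a, A a -> m <= a) /\ (forall m', (forall a, A a -> m' <= a) -> m' <= m).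

(* d = d(nu, C, rho) (this also encodes that it is finite) *)
Definition near_opt_dim {X} (P : HPart X) (f : X -> R) (xs : X) (nu C rho d : R) : Prop :=
  is_inf (nod_set P f xs nu C rho) d.

(* Run of SequOOL: op h = list of indices of the depth-h cells opened. *)
(* depth-h cells evaluated (h >= 1): children of opened depth-(h-1) cells *)
Definition evaluated {X} (P : HPart X) (op : nat -> list nat) (h : nat) : list nat :=
  filter (fun j => existsb (Nat.eqb (par P (h - 1) j)) (op (h - 1)%nat)) (seq 1 (I P h)).

(* op is a (possible, arbitrary tie-breaking) run of SequOOL with budget n *)
Definition sequool_run {X} (P : HPart X) (f : X -> R) (n : nat) (op : nat -> list nat) : Prop :=
  op 0%nat = [1%nat] /\
  (forall h, (1 <= h <= hmax n)%nat ->
     NoDup (op h) /\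
     incl (op h) (evaluated P op h) /\
     length (op h) = Nat.min (hmax n / h) (length (evaluated P op h)) /\
     (forall j k, In j (op h) -> In k (evaluated P op h) -> ~ In k (op h) ->
        fval P f h k <= fval P f h j)) /\
  (forall h, (hmax n < h)%nat -> op h = []).

(* bot_h: depth of the deepest opened cell containing xs at end of iteration h
   (bot_0 = 0, the root being opened at initialization) *)
Fixpoint bot {X} (P : HPart X) (op : nat -> list nat) (xs : X) (h : nat) : nat :=
  match h with
  | O => O
  | S k => if existsb (Nat.eqb (idx P (S k) xs)) (op (S k)) then S k else bot P op xs k
  end.

(* Main.v *)
Require Import Defs.
From Stdlib Require Import Reals List.
From Stdlib Require Import Lra Lia Arith ClassicalEpsilon.
Import ListNotations.
Open Scope R_scope.

Lemma my_exp_le x y : x <= y -> exp x <= exp y.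
Proof. intros H; destruct (Rle_lt_or_eq_dec _ _ H) as [H'|H'].
  left; apply exp_increasing; auto. subst; lra. Qed.

Lemma my_ln_le x y : 0 < x -> x <= y -> ln x <= ln y.
Proof. intros H0 H; destruct (Rle_lt_or_eq_dec _ _ H) as [H'|H'].
  left; apply ln_increasing; auto. subst; lra. Qed.

Lemma Nbound {X} (P : HPart X) f xs nu C rho d h :
  near_opt_dim P f xs nu C rho d -> 0 < rho < 1 -> 1 < C -> (1 <= h)%nat ->
  INR (Ncells P f xs h (3*nu*rho^h)) <= C * Rpower rho (-(d*INR h)).
Proof.
  intros [Hlb Hglb] Hr HC Hh.
  set (N := INR (Ncells P f xs h (3*nu*rho^h))).
  assert (HN0 : 0 <= N) by apply pos_INR.
  assert (Hp : 0 < C * Rpower rho (-(d*INR h))) by (unfold Rpower; pose proof (exp_pos (-(d * INR h) * ln rho)); nra).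
  destruct (Rle_lt_or_eq_dec _ _ HN0) as [HN|HN]; [|lra].
  assert (HL : ln rho < 0) by (rewrite <- ln_1; apply ln_increasing; lra).
  assert (Hh' : 1 <= INR h) by (apply (le_INR 1); auto).
  set (K := - INR h * ln rho).
  assert (HK : 0 < K) by (unfold K; nra).
  set (d1 := (ln N - ln C) / K).
  assert (Hd1K : d1 * K = ln N - ln C) by (unfold d1; field; lra).
  assert (Hd1 : d1 <= d).
  { apply Hglb. intros a [Ha0 Ha]. specialize (Ha h). fold N in Ha.
    unfold Rpower in Ha.
    assert (H1 := my_ln_le _ _ HN Ha).
    rewrite ln_mult in H1 by (lra || apply exp_pos). rewrite ln_exp in H1.
    apply Rmult_le_reg_r with K; auto. rewrite Hd1K. unfold K. nra. }
  assert (H2 : ln N - ln C <= -(d * INR h) * ln rho).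
  { rewrite <- Hd1K. unfold K. assert (d1 * K <= d * K) by (apply Rmult_le_compat_r; lra). unfold K in H. nra. }
  apply my_exp_le in H2. unfold Rpower.
  unfold Rminus in H2. rewrite exp_plus, exp_Ropp, !exp_ln in H2 by lra.
  apply Rmult_le_compat_l with (r := C) in H2; [|lra].
  replace (C * (N * / C)) with N in H2 by (field; lra). exact H2.
Qed.

Lemma step {X} (P : HPart X) (f : X -> R) (n : nat) (op : nat -> list nat)
  (xs : X) (nu rho C d : R) (k : nat) :
  sequool_run P f n op -> 0 < nu -> 0 < rho < 1 ->
  local_smooth P f xs nu rho -> 1 < C ->
  near_opt_dim P f xs nu C rho d ->
  (1 <= k <= hmax n)%nat ->
  In (idx P (k-1) xs) (op (k-1)%nat) ->
  INR (hmax n) / INR k >= C * Rpower rho (- (d * INR k)) ->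
  In (idx P k xs) (op k).
Proof.
  intros Hrun Hnu Hr Hls HC Hd Hk Hprev Hcond.
  destruct Hrun as [H0 [Hmid Hend]].
  destruct (Hmid k Hk) as [Hnd [Hincl [Hlen Hmax]]].
  set (i := idx P k xs).
  assert (Hi : (1 <= i <= I P k)%nat) by apply idx_range.
  assert (Hev : In i (evaluated P op k)).
  { unfold evaluated. apply filter_In; split.
    - apply in_seq; lia.
    - apply existsb_exists. exists (idx P (k-1) xs); split; auto.
      apply Nat.eqb_eq. unfold i.
      replace (idx P k xs) with (idx P (S (k-1)) xs) by (f_equal; lia).
      apply par_ok. }
  destruct (In_dec Nat.eq_dec i (op k)) as [|Hni]; auto. exfalso.
  assert (Hnd2 : NoDup (i :: op k)) by (constructor; auto).
  assert (Hl1 : (S (length (op k)) <= length (evaluated P op k))%nat).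
  { change (S (length (op k))) with (length (i :: op k)).
    apply NoDup_incl_length; auto. intros x [<-|Hx]; auto. }
  set (q := (hmax n / k)%nat).
  assert (Hq : length (op k) = q) by (rewrite Hlen; unfold q; lia).
  assert (Hfi : fval P f k i >= f xs - nu * rho ^ k).
  { unfold fval. apply Hls. unfold in_cell. apply rep_in; auto. }
  assert (Hrk : 0 < rho ^ k) by (apply pow_lt; lra).
  assert (Hcell : forall j, In j (i :: op k) ->
     In j (filter (fun i0 => pb (sup_cell_ge P f k i0 (f xs - 3*nu*rho^k))) (seq 1 (I P k)))).
  { intros j Hj.
    assert (Hje : In j (evaluated P op k)) by (destruct Hj as [<-|Hj]; auto).
    unfold evaluated in Hje. apply filter_In in Hje. destruct Hje as [Hjs _].
    assert (Hjr := Hjs). apply in_seq in Hjr.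
    assert (Hfj : fval P f k j >= f xs - nu * rho ^ k).
    { destruct Hj as [<-|Hj]; auto.
      specialize (Hmax j i Hj Hev Hni). lra. }
    apply filter_In; split; auto.
    unfold pb. destruct excluded_middle_informative as [|Hn]; auto.
    exfalso; apply Hn. intros u Hu.
    specialize (Hu (rep P k j)). unfold in_cell in Hu.
    rewrite rep_in in Hu by lia. specialize (Hu eq_refl). unfold fval in Hfj. nra. }
  assert (HNc : (S q <= Ncells P f xs k (3*nu*rho^k))%nat).
  { unfold Ncells. rewrite <- Hq. change (S (length (op k))) with (length (i :: op k)).
    apply NoDup_incl_length; [auto|]. intros x Hx; apply Hcell; auto. }
  assert (HNb := Nbound P f xs nu C rho d k Hd Hr HC (proj1 Hk)).
  apply le_INR in HNc. rewrite S_INR in HNc.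
  assert (Hdm : (hmax n < k * (q + 1))%nat).
  { unfold q. pose proof (Nat.div_mod (hmax n) k ltac:(lia)).
    pose proof (Nat.mod_upper_bound (hmax n) k ltac:(lia)). nia. }
  apply lt_INR in Hdm. rewrite mult_INR, plus_INR in Hdm. simpl INR at 3 in Hdm.
  assert (Hk0 : 0 < INR k) by (apply lt_0_INR; lia).
  assert (INR (hmax n) / INR k < INR q + 1).
  { apply Rmult_lt_reg_r with (INR k); auto. unfold Rdiv.
    rewrite Rmult_assoc, Rinv_l by lra. simpl in Hdm. nra. }
  lra.
Qed.

Theorem lemma1 (X : Type) (P : HPart X) (f : X -> R) (n : nat) (op : nat -> list nat)
  (xs : X) (nu rho C d : R) (h : nat) :
  sequool_run P f n op ->
  global_opt f xs ->
  0 < nu -> 0 < rho < 1 ->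
  local_smooth P f xs nu rho ->
  1 < C ->
  near_opt_dim P f xs nu C rho d ->
  (1 <= h <= hmax n)%nat ->
  INR (hmax n) / INR h >= C * Rpower rho (- (d * INR h)) ->
  bot P op xs h = h.
Proof.
  intros Hrun Hopt Hnu Hr Hls HC Hd Hh Hcond.
  assert (Hd0 : 0 <= d).
  { destruct Hd as [_ Hglb]. apply Hglb. intros a [Ha _]; auto. }
  assert (HL : ln rho < 0) by (rewrite <- ln_1; apply ln_increasing; lra).
  assert (Hc : forall k, (1 <= k <= h)%nat ->
            INR (hmax n) / INR k >= C * Rpower rho (- (d * INR k))).
  { intros k Hk.
    assert (Hk0 : 0 < INR k) by (apply lt_0_INR; lia).
    assert (Hkh : INR k <= INR h) by (apply le_INR; lia).
    assert (H1 : INR (hmax n) / INR h <= INR (hmax n) / INR k).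
    { unfold Rdiv. apply Rmult_le_compat_l. apply pos_INR.
      apply Rinv_le_contravar; auto. }
    assert (H2 : Rpower rho (- (d * INR k)) <= Rpower rho (- (d * INR h))).
    { unfold Rpower. apply my_exp_le.
      assert (d * INR k <= d * INR h) by (apply Rmult_le_compat_l; auto). nra. }
    assert (C * Rpower rho (- (d * INR k)) <= C * Rpower rho (- (d * INR h)))
      by (apply Rmult_le_compat_l; lra).
    lra. }
  assert (Hall : forall k, (1 <= k <= h)%nat -> In (idx P k xs) (op k)).
  { induction k as [|k IH]; intros Hk; [lia|].
    apply (step P f n op xs nu rho C d (S k)); auto; try lia; try (apply Hc; lia).
    replace (S k - 1)%nat with k by lia.
    destruct k as [|k].
    - destruct Hrun as [H0 _]. rewrite H0.
      pose proof (idx_range X P 0 xs) as Hr0. rewrite I_root in Hr0.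
      left; lia.
    - apply IH; lia. }
  destruct h as [|h']; [lia|]. simpl.
  replace (existsb (Nat.eqb (idx P (S h') xs)) (op (S h'))) with true; auto.
  symmetry. apply existsb_exists. exists (idx P (S h') xs); split.
  apply Hall; lia. apply Nat.eqb_refl.
Qed.
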